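(* Let $N\ge 2$ and consider the cross gadget of size $N$ in the Clos network $C_{N,N}$, i.e. the set of flows consisting of one flow from source server $s_i^j$ (of input switch $I_i$) to destination server $t_j^i$ (of output switch $O_j$) with demand $1$, for each $i\in[N]$ and $j\in[N-1]$. Then every routing of this set with congestion $1$ satisfies: (1) for all $i\in[N]$, the $N-1$ flows leaving $I_i$ are assigned to $N-1$ different middle switches, and for all $j\in[N-1]$, the $N$ flows entering $O_j$ are assigned to $N$ different middle switches; (2) for all $i_1\neq i_2$ in $[N]$, the middle switch to which no flow leaving $I_{i_1}$ is assigned differs from the middle switch to which no flow leaving $I_{i_2}$ is assigned.
   Context: Clos network $C_{N,R}$: a directed graph with $N$ middle switches $M_1,\dots,M_N$, $R$ input switches $I_1,\dots,I_R$, $R$ output switches $O_1,\dots,O_R$, source servers $s_i^k$ attached to $I_i$ and destination servers $t_i^k$ attached to $O_i$ ($i\in[R]$, $k\in[N]$), with edges $s_i^kI_i$, $I_iM_m$, $M_mO_i$, $O_it_i^k$; all links have capacity $1$. A routing assigns each flow $f$ (from $I_{i(f)}$ to $O_{j(f)}$, demand $\mathrm{dem}(f)$) a single middle switch $r(f)\in[N]$; its congestion is $\max_{i\in[R],m\in[N]}\max\{\sum_{f:i(f)=i,r(f)=m}\mathrm{dem}(f),\ \sum_{f:j(f)=i,r(f)=m}\mathrm{dem}(f)\}$. *)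

(* Defs.v *)
From mathcomp Require Import all_boot.
Set Implicit Arguments. Unset Strict Implicit. Unset Printing Implicit Defensive.

(* A set of flows in the Clos network C_{N,R}: a finite type F of flows,
   each flow f has an input switch src f = I_{i(f)}, an output switch
   dst f = O_{j(f)} (both in [R]) and a demand dem f.
   A routing r assigns each flow a middle switch in [N].
   Congestion = max over switches i in [R] and middle switches m in [N] of
   the load on links I_i M_m and M_m O_i. *)
Definition congestion (F : finType) (N R : nat) (src dst : F -> 'I_R)
  (dem : F -> nat) (r : F -> 'I_N) : nat :=
  \max_(i < R) \max_(m < N)
     maxn (\sum_(f | (src f == i) && (r f == m)) dem f)
          (\sum_(f | (dst f == i) && (r f == m)) dem f).

(* Cross gadget of size N in C_{N,N}: one flow (i,j) for each i in [N],
   j in [N-1], from s_i^j (input switch I_i) to t_j^i (output switch O_j),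
   with demand 1. *)
Definition cross_flow (N : nat) := ('I_N * 'I_N.-1)%type.

Definition cross_src (N : nat) (f : cross_flow N) : 'I_N := f.1.
Definition cross_dst (N : nat) (f : cross_flow N) : 'I_N :=
  widen_ord (leq_pred N) f.2.
Definition cross_dem (N : nat) (f : cross_flow N) : nat := 1.

(* Main.v *)
Require Import Defs.
From mathcomp Require Import all_boot.

Theorem mainTheorem8 (N : nat) (hN : 2 <= N) (r : cross_flow N -> 'I_N) :
  congestion (@cross_src N) (@cross_dst N) (@cross_dem N) r = 1 ->
  ((forall i : 'I_N, injective (fun j : 'I_N.-1 => r (i, j))) /\
   (forall j : 'I_N.-1, injective (fun i : 'I_N => r (i, j)))) /\
  (forall (i1 i2 : 'I_N) (m1 m2 : 'I_N), i1 != i2 ->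
     (forall j : 'I_N.-1, r (i1, j) != m1) ->
     (forall j : 'I_N.-1, r (i2, j) != m2) ->
     m1 != m2).
Proof.
move=> hc.
have hb : forall (i m : 'I_N),
  #|[pred f : cross_flow N | (cross_src f == i) && (r f == m)]| <= 1 /\
  #|[pred f : cross_flow N | (cross_dst f == i) && (r f == m)]| <= 1.
  move=> i m.
  have := leq_bigmax (F := fun m : 'I_N => maxn
     (\sum_(f | (cross_src f == i) && (r f == m)) cross_dem f)
     (\sum_(f | (cross_dst f == i) && (r f == m)) cross_dem f)) m.
  have := leq_bigmax (F := fun i : 'I_N => \max_(m < N) maxn
     (\sum_(f | (cross_src f == i) && (r f == m)) cross_dem f)
     (\sum_(f | (cross_dst f == i) && (r f == m)) cross_dem f)) i.
  move: hc; rewrite /congestion => -> H1 H2.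
  have := leq_trans H2 H1; rewrite geq_max /cross_dem !sum1_card.
  by case/andP.
have rowinj : forall i : 'I_N, injective (fun j : 'I_N.-1 => r (i, j)).
  move=> i j1 j2 /= e.
  have [/card_le1_eqP H _] := hb i (r (i, j1)).
  have := H (i, j1) (i, j2); rewrite !inE /cross_src /= e !eqxx => /(_ isT isT).
  by case.
have colinj : forall j : 'I_N.-1, injective (fun i : 'I_N => r (i, j)).
  move=> j i1 i2 /= e.
  have [_ /card_le1_eqP H] := hb (widen_ord (leq_pred N) j) (r (i1, j)).
  have := H (i1, j) (i2, j); rewrite !inE /cross_dst /= e !eqxx => /(_ isT isT).
  by case.
split; first by split.
move=> i1 i2 m1 m2 ne h1 h2; apply/negP => /eqP em; subst m2.
pose g j := invF (colinj j) m1.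
have rg : forall j, r (g j, j) = m1 by move=> j; rewrite /g (f_invF (colinj j)).
have ginj : injective g.
  move=> j1 j2 e; apply: (rowinj (g j1)) => /=; by rewrite {2}e !rg.
have sub : g @: setT \subset ~: [set i1; i2].
  apply/subsetP => x /imsetP [j _ ->]; rewrite !inE.
  apply/negP => /orP [] /eqP E.
  - by move: (h1 j); rewrite -E rg eqxx.
  - by move: (h2 j); rewrite -E rg eqxx.
have := subset_leq_card sub.
rewrite card_imset // cardsT card_ord.
have := cardsC [set i1; i2]; rewrite cards2 ne card_ord => E.
set k := #|~: [set i1; i2]| in E *.
move=> L; have : (2 + k).-1 <= k by rewrite E.
by rewrite add2n /= ltnn.
Qed.
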